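(* Let $C\subseteq\mathbb{F}_q^{2n}$ be a symplectic self-orthogonal $\mathbb F_q$-linear code with stabilizer code $Q(C)$, and let $\emptyset\neq I\subsetneq J\subseteq\{1,\dots,n\}$. If $|J|\geq n-\mathrm{swt}(C^{\perp_s})+|I|+1$, then $Q(C)$ is $(I,J)$-locally recoverable.
   Context: $q$ is a power of a prime $p$. Vectors of $\mathbb{F}_q^{2n}$ are written $(\mathbf a|\mathbf b)$, coordinate pair $(a_j,b_j)$ indexed by $j\in\{1,\dots,n\}$. Symplectic form $(\mathbf a|\mathbf b)\cdot_s(\mathbf c|\mathbf d)=\mathbf a\cdot\mathbf d-\mathbf b\cdot\mathbf c$; $C^{\perp_s}$ its dual; $C$ symplectic self-orthogonal if $C\subseteq C^{\perp_s}$. The symplectic weight of $(\mathbf a|\mathbf b)$ is $\#\{j:(a_j,b_j)\ne(0,0)\}$, and $\mathrm{swt}(D)$ is the minimum symplectic weight of a nonzero vector of $D$. Quantum setting: $\xi=e^{2\pi\iota/p}$; $X(a)|x\rangle=|x+a\rangle$, $Z(b)|x\rangle=\xi^{\mathrm{tr}_{q/p}(bx)}|x\rangle$ on $\mathbb C^q$; $E_{(\mathbf a,\mathbf b)}=\bigotimes_jX(a_j)Z(b_j)$. $Q(C)\subseteq\mathbb C^{q^n}$ is the common eigenspace $\{v:Ev=\lambda(E)v\ \forall E\in S\}$, $S$ the commutative group generated by scalars $\xi^\ell\mathcal I$ and $E_{\mathbf y}$, $\mathbf y\in C$, $\lambda$ a character with $\lambda(\xi\mathcal I)=\xi$. Let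 $\Gamma(\rho)=q^{-2}\sum_{a,b}X(a)Z(b)\rho(X(a)Z(b))^\dagger$, and $\Gamma^I$ apply $\Gamma$ to the qudits indexed by $I$, identity elsewhere. $Q$ is $(I,J)$-locally recoverable if there is a trace-preserving quantum operation $\mathcal R$ acting only on the qudits indexed by $J$ with $\mathcal R\circ\Gamma^I(|\varphi\rangle\langle\varphi|)=|\varphi\rangle\langle\varphi|$ for all $|\varphi\rangle\in Q$. *)

(* Defs.v *)
From HB Require Import structures.
From mathcomp Require Import all_boot all_order all_algebra algC.
Set Implicit Arguments. Unset Strict Implicit. Unset Printing Implicit Defensive.
Import Order.TTheory GRing.Theory Num.Theory.
Local Open Scope ring_scope.

Definition apart (F : finFieldType) (n : nat) (v : 'rV[F]_(n + n)) (j : 'I_n) : F :=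
  v 0 (lshift n j).
Definition bpart (F : finFieldType) (n : nat) (v : 'rV[F]_(n + n)) (j : 'I_n) : F :=
  v 0 (rshift n j).

Definition sform (F : finFieldType) (n : nat) (u v : 'rV[F]_(n + n)) : F :=
  \sum_(j < n) (apart u j * bpart v j - bpart u j * apart v j).

Definition sdual (F : finFieldType) (n : nat) (C : {vspace 'rV[F]_(n + n)}) :
  {set 'rV[F]_(n + n)} :=
  [set w | [forall v, (v \in C) ==> (sform v w == 0)]].

Definition symp_self_orth (F : finFieldType) (n : nat) (C : {vspace 'rV[F]_(n + n)}) :=
  {subset C <= sdual C}.

Definition swtv (F : finFieldType) (n : nat) (v : 'rV[F]_(n + n)) : nat :=
  #|[set j : 'I_n | (apart v j != 0) || (bpart v j != 0)]|.

(* minimum symplectic weight of a nonzero vector of D (default n if D = {0}) *)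
Definition swt (F : finFieldType) (n : nat) (D : {set 'rV[F]_(n + n)}) : nat :=
  \big[minn/n]_(v in D | v != 0) swtv v.

(* computational basis of C^{q^n}: configurations x in F^n *)
Definition config (F : finFieldType) (n : nat) := {ffun 'I_n -> F}.

(* operators on C^{q^n}, indexed through enum_rank of configurations *)
Definition op (F : finFieldType) (n : nat) := 'M[algC]_(#|config F n|).
Definition ket (F : finFieldType) (n : nat) := 'cV[algC]_(#|config F n|).

Definition ent (F : finFieldType) (n : nat) (M : op F n) (x y : config F n) : algC :=
  M (enum_rank x) (enum_rank y).

Definition mkop (F : finFieldType) (n : nat) (f : config F n -> config F n -> algC) :
  op F n := \matrix_(i, j) f (enum_val i) (enum_val j).

Definition adj (m k : nat) (A : 'M[algC]_(m, k)) : 'M[algC]_(k, m) :=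
  (map_mx (fun z => z^*) A)^T.

(* xi = e^{2 pi i / p}: p.-root (-1) is the p-th root of -1 with minimal
   non-negative argument, i.e. e^{i pi / p}; its square is e^{2 i pi / p}. *)
Definition xi (p : nat) : algC := (p.-root (-1)) ^+ 2.

Definition ftrace (F : finFieldType) (p : nat) (x : F) : F :=
  \sum_(i < logn p #|F|) x ^+ (p ^ i).

(* the element of the prime field F_p, as a natural number in [0, p) *)
Definition prime_field_nat (F : finFieldType) (p : nat) (y : F) : nat :=
  find (fun i : nat => i%:R == y) (iota 0 p).

Definition xi_tr (F : finFieldType) (p : nat) (z : F) : algC :=
  xi p ^+ prime_field_nat p (ftrace p z).

(* E_{(a,b)} = (x)_j X(a_j) Z(b_j), with X(a)Z(b)|x> = xi^{tr(bx)} |x+a>;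
   entry <y| E |x>. *)
Definition Eop (F : finFieldType) (p n : nat) (a b : 'I_n -> F) : op F n :=
  mkop (fun y x => \prod_(j < n)
          ((y j == x j + a j)%:R * xi_tr p (b j * x j))).

Definition Evec (F : finFieldType) (p n : nat) (v : 'rV[F]_(n + n)) : op F n :=
  Eop p (apart v) (bpart v).

Inductive genS (F : finFieldType) (p n : nat) (C : {vspace 'rV[F]_(n + n)}) :
  op F n -> Prop :=
| genS_scalar (l : nat) : genS p C ((xi p ^+ l)%:M)
| genS_E (y : 'rV[F]_(n + n)) : y \in C -> genS p C (Evec p y)
| genS_mul (A B : op F n) : genS p C A -> genS p C B -> genS p C (A *m B).

Definition stab_char (F : finFieldType) (p n : nat) (C : {vspace 'rV[F]_(n + n)})
  (lam : op F n -> algC) : Prop :=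
  (forall A B, genS p C A -> genS p C B -> lam (A *m B) = lam A * lam B)
  /\ lam ((xi p)%:M) = xi p.

Definition inQ (F : finFieldType) (p n : nat) (C : {vspace 'rV[F]_(n + n)})
  (lam : op F n -> algC) (v : ket F n) : Prop :=
  forall E, genS p C E -> E *m v = lam E *: v.

Definition unit_at (F : finFieldType) (n : nat) (i : 'I_n) (a : F) : 'I_n -> F :=
  fun j => if j == i then a else 0.

Definition gamma_at (F : finFieldType) (p n : nat) (i : 'I_n) (rho : op F n) : op F n :=
  ((#|F| ^ 2)%:R)^-1 *:
    \sum_(a : F) \sum_(b : F)
       (Eop p (unit_at i a) (unit_at i b) *m rho *m adj (Eop p (unit_at i a) (unit_at i b))).

Definition gammaI (F : finFieldType) (p n : nat) (I : {set 'I_n}) (rho : op F n) : op F n :=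
  foldr (@gamma_at F p n) rho (enum I).

Definition proj (F : finFieldType) (n : nat) (J : {set 'I_n}) (x : config F n) :
  config F n := [ffun i => if i \in J then x i else 0].

(* K acts only on the qudits of J: K = A (x) Id_{J^c} *)
Definition acts_only_on (F : finFieldType) (n : nat) (J : {set 'I_n}) (K : op F n) : Prop :=
  exists a : config F n -> config F n -> algC,
    forall x y, ent K x y = a (proj J x) (proj J y) * (proj (~: J) x == proj (~: J) y)%:R.

Definition tp_op_on (F : finFieldType) (n : nat) (J : {set 'I_n}) (Ks : seq (op F n)) : Prop :=
  (forall K, K \in Ks -> acts_only_on J K) /\
  \sum_(K <- Ks) (adj K *m K) = 1%:M.

Definition apply_op (F : finFieldType) (n : nat) (Ks : seq (op F n)) (rho : op F n) : op F n :=
  \sum_(K <- Ks) (K *m rho *m adj K).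

Definition locally_recoverable (F : finFieldType) (p n : nat) (C : {vspace 'rV[F]_(n + n)})
  (lam : op F n -> algC) (I J : {set 'I_n}) : Prop :=
  exists Ks : seq (op F n), tp_op_on J Ks /\
    forall v : ket F n, inQ p C lam v ->
      apply_op Ks (gammaI p I (v *m adj v)) = v *m adj v.

(* Main.v *)
Require Import Defs.
From HB Require Import structures.
From mathcomp Require Import all_boot all_order all_algebra all_field algC ring zify.
From Stdlib Require Import Classical.
Set Implicit Arguments. Unset Strict Implicit. Unset Printing Implicit Defensive.
Import Order.TTheory GRing.Theory Num.Theory.
Local Open Scope ring_scope.


Section Xi.
Variable p : nat.
Hypothesis pr_p : prime p.

Lemma p_gt1 : (1 < p)%N. Proof. exact: prime_gt1. Qed.
Lemma p_gt0 : (0 < p)%N. Proof. exact: prime_gt0. Qed.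

Lemma xi_p : xi p ^+ p = 1.
Proof.
rewrite /xi -exprM mulnC exprM rootCK ?p_gt0 //.
by rewrite expr2 mulrNN mulr1.
Qed.

Lemma norm_xi : `|xi p| = 1.
Proof.
by rewrite /xi normrX norm_rootC normrN1 rootC1 ?p_gt0 // expr1n.
Qed.

Lemma xi_neq1 : xi p != 1.
Proof.
rewrite /xi sqrf_eq1; apply/norP; split.
- apply/eqP => r1. have := rootCK p_gt0 (-1 : algC).
  rewrite r1 expr1n => /eqP. rewrite -subr_eq0 opprK -(natrD _ 1 1) pnatr_eq0 //.
- apply/eqP => r1. have := rootC_lt0 (-1 : algC) p_gt1.
  by rewrite r1 ltrN10.
Qed.

Lemma xi_prim m : (0 < m < p)%N -> xi p ^+ m != 1.
Proof.
case/andP=> m0 mp; apply/eqP => xm.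
have cop : coprime m p.
  rewrite coprime_sym prime_coprime //; apply/negP => /dvdn_leq.
  by move=> /(_ m0); rewrite leqNgt mp.
have [a _] := Bezoutl p m0; rewrite (eqP cop) => /dvdnP [b hb].
have : xi p ^+ (1 + a * p) = xi p ^+ (b * m) by rewrite hb.
rewrite exprD expr1 mulnC exprM xi_p expr1n mulr1 mulnC exprM xm expr1n.
by move=> h; move: xi_neq1; rewrite h eqxx.
Qed.
End Xi.


Section Trace.
Variables (F : finFieldType) (p : nat).
Hypotheses (pr_p : prime p) (chF : p \in [pchar F]).

Local Notation k := (logn p #|F|).

Lemma cardF : #|F| = (p ^ k)%N.
Proof. exact: (card_pprimeChar chF). Qed.

Lemma k_gt0 : (0 < k)%N.
Proof.
case H: k => //. have := cardF; rewrite H expn0 => c1.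
have : (1 < #|F|)%N. 
  by rewrite (cardD1 (0 : F)) (cardD1 (1 : F)) !inE oner_neq0.
by rewrite c1.
Qed.

Lemma frobX i (x y : F) : (x + y) ^+ (p ^ i) = x ^+ (p ^ i) + y ^+ (p ^ i).
Proof.
apply: exprDn_pchar; rewrite pnatX; apply/orP; left.
by apply: sub_in_pnat (pnat_id pr_p) => r _ /eqP ->.
Qed.

Lemma ftraceD (x y : F) : ftrace p (x + y) = ftrace p x + ftrace p y.
Proof. by rewrite /ftrace -big_split; apply: eq_bigr => i _; rewrite frobX. Qed.

Lemma ftrace0 : ftrace p (0 : F) = 0.
Proof. by rewrite /ftrace big1 // => i _; rewrite expr0n eqn0Ngt expn_gt0 prime_gt0. Qed.

Lemma ftraceP (x : F) : ftrace p x ^+ p = ftrace p x.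
Proof.
rewrite -(pFrobenius_autE chF) /ftrace rmorph_sum /=.
under eq_bigr => i _ do rewrite pFrobenius_autE -exprM -expnSr.
have E : x ^+ (p ^ k) = x by rewrite -cardF expf_card.
move: E; have := k_gt0; case: k => // k' _ E.
rewrite big_ord_recr big_ord_recl /= E expn0 expr1 addrC.
by congr (_ + _); apply: eq_bigr => i _.
Qed.

Lemma natF_inj i j : (i < p)%N -> (j < p)%N -> (i%:R == j%:R :> F) = (i == j).
Proof.
wlog le : i j / (j <= i)%N => [W|] ip jp.
  by case: (leqP j i) => h; [|rewrite eq_sym [(i == j)]eq_sym]; apply: W => //; apply: ltnW.
apply/eqP/eqP => [|-> //] h.
have : (p %| i - j)%N by rewrite (dvdn_pcharf chF) natrB // h subrr.
move=> /dvdn_leq; case: (ltnP j i) => [ji|ij].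
  rewrite subn_gt0 ji => /(_ isT); rewrite leqNgt.
  by rewrite (leq_ltn_trans (leq_subr _ _) ip).
by move=> _; apply/eqP; rewrite eqn_leq le ij.
Qed.

Lemma fixp_nat (y : F) : y ^+ p = y -> exists2 m, (m < p)%N & y = m%:R.
Proof.
move=> yp.
case: (boolP (y \in ([seq i%:R | i <- iota 0 p] : seq F))) => [/mapP [i]|notin].
  by rewrite mem_iota add0n => /andP [_ ip] ->; exists i.
exfalso.
pose P : {poly F} := 'X^p - 'X.
have szP : size P = p.+1.
  rewrite /P size_addl ?size_polyXn // size_opp size_polyX ltnS.
  exact: p_gt1.
have P0 : P != 0 by rewrite -size_poly_eq0 szP.
have := @max_poly_roots _ P (y :: [seq i%:R | i <- iota 0 p]) P0.
rewrite /= notin size_map size_iota szP ltnn.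
have -> : uniq ([seq i%:R | i <- iota 0 p] : seq F).
  rewrite map_inj_in_uniq ?iota_uniq // => i j.
  rewrite !mem_iota !add0n => /andP [_ ip] /andP [_ jp] /eqP.
  by rewrite natF_inj // => /eqP.
move=> H; suff: false by []; apply: H => //; apply/andP; split.
  by rewrite /root /P !hornerE yp subrr eqxx.
apply/allP => z /mapP [i _ ->].
by rewrite /root !hornerE -(pFrobenius_autE chF) pFrobenius_aut_nat subrr.
Qed.

Lemma pfn_nat m : (m < p)%N -> prime_field_nat p (m%:R : F) = m.
Proof.
move=> mp; rewrite /prime_field_nat.
rewrite (@eq_in_find _ _ (pred1 m)); last first.
  by move=> i; rewrite mem_iota add0n => /andP [_ ip] /=; rewrite natF_inj.
have := @index_uniq _ 0%N m (iota 0 p); rewrite size_iota iota_uniq nth_iota // add0n; apply => //.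

Qed.

Lemma ftrace_nat (x : F) : exists2 m, (m < p)%N & ftrace p x = m%:R.
Proof. exact/fixp_nat/ftraceP. Qed.

Lemma xi_trD (x y : F) : xi_tr p (x + y) = xi_tr p x * xi_tr p y.
Proof.
rewrite /xi_tr ftraceD.
have [m mp ->] := ftrace_nat x; have [m' mp' ->] := ftrace_nat y.
rewrite -natrD -(GRing.natr_mod_pchar chF) !pfn_nat ?ltn_pmod ?prime_gt0 //.
by rewrite (expr_mod _ (xi_p pr_p)) exprD.
Qed.

Lemma xi_tr0 : xi_tr p (0 : F) = 1.
Proof. by rewrite /xi_tr ftrace0 -[0 : F]/(0%:R) pfn_nat ?prime_gt0. Qed.

Lemma norm_xi_tr (x : F) : `|xi_tr p x| = 1.
Proof. by rewrite /xi_tr normrX norm_xi // expr1n. Qed.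

Lemma xi_tr_conjK (x : F) : (xi_tr p x)^* * xi_tr p x = 1.
Proof. by rewrite -normCKC norm_xi_tr expr1n. Qed.

Lemma xi_tr_neq0 (x : F) : xi_tr p x != 0.
Proof. by rewrite -normr_eq0 norm_xi_tr oner_eq0. Qed.

Lemma xi_trN (x : F) : xi_tr p (- x) = (xi_tr p x)^*.
Proof.
apply: (mulIf (xi_tr_neq0 x)); rewrite xi_tr_conjK -xi_trD addNr xi_tr0 //.
Qed.

Lemma ftrace_nonzero : exists x : F, ftrace p x != 0.
Proof.
apply/existsP; rewrite -negb_forall; apply/negP => /forallP H.
pose T : {poly F} := \sum_(i < k) 'X^(p ^ i).
have Tx x : T.[x] = ftrace p x.
  by rewrite /T horner_sum /ftrace; apply: eq_bigr => i _; rewrite hornerXn.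
have T0 : T != 0.
  have kk : (k.-1 < k)%N by rewrite ltn_predL k_gt0.
  apply/eqP => /(congr1 (fun P : {poly F} => P`_(p ^ k.-1))).
  rewrite coef0 /T coef_sum (bigD1 (Ordinal kk)) //= coefXn eqxx big1 ?addr0.
    by move/eqP; rewrite oner_eq0.
  move=> i /eqP ne; rewrite coefXn eqn_exp2l ?p_gt1 //.
  case: eqP => // h; exfalso; apply: ne; apply: val_inj => /=; by rewrite h.
have := @max_poly_roots _ T (enum F) T0.
rewrite enum_uniq -cardE cardF.
have -> : all (root T) (enum F) by apply/allP => x _; rewrite /root Tx H.
move=> /(_ isT isT).
have szT : (size T <= (p ^ k.-1).+1)%N.
  apply: leq_trans (size_sum _ _ _) _.
  apply/bigmax_leqP => i _; rewrite size_polyXn ltnS leq_exp2l ?p_gt1 //.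
  by rewrite -ltnS prednK ?k_gt0.
move=> /leq_trans /(_ szT); rewrite ltnS leqNgt.
have := k_gt0; case: k => // k' _ /=.
by rewrite ltn_exp2l ?ltnSn // p_gt1.
Qed.

Lemma xi_tr_nontriv : exists u : F, xi_tr p u != 1.
Proof.
have [x tx] := ftrace_nonzero; exists x.
have [m mp E] := ftrace_nat x.
rewrite /xi_tr E pfn_nat // xi_prim //; apply/andP; split => //.
by rewrite lt0n; apply: contraNneq tx => m0; rewrite E m0.
Qed.

End Trace.


Section Adj.
Lemma hadjM m k l (A : 'M[algC]_(m, k)) (B : 'M[algC]_(k, l)) :
  adj (A *m B) = adj B *m adj A.
Proof. by rewrite /adj map_mxM trmx_mul. Qed.
Lemma hadjD m k (A B : 'M[algC]_(m, k)) : adj (A + B) = adj A + adj B.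
Proof. by rewrite /adj map_mxD linearD. Qed.
Lemma hadjB m k (A B : 'M[algC]_(m, k)) : adj (A - B) = adj A - adj B.
Proof. by rewrite /adj map_mxB linearB. Qed.
Lemma hadjZ m k c (A : 'M[algC]_(m, k)) : adj (c *: A) = c^* *: adj A.
Proof. by rewrite /adj map_mxZ linearZ. Qed.
Lemma hadj1 m : adj (1%:M : 'M[algC]_m) = 1%:M.
Proof. by rewrite /adj map_mx1 trmx1. Qed.
Lemma hadj0 m k : adj (0 : 'M[algC]_(m, k)) = 0.
Proof. by rewrite /adj map_mx0 trmx0. Qed.
Lemma hadjK m k (A : 'M[algC]_(m, k)) : adj (adj A) = A.
Proof. by apply/matrixP => i j; rewrite /adj !mxE conjCK. Qed.
Lemma hadj_sum m k (I : Type) (r : seq I) (P : pred I) (G : I -> 'M[algC]_(m, k)) :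
  adj (\sum_(i <- r | P i) G i) = \sum_(i <- r | P i) adj (G i).
Proof. by apply: (big_morph _ (@hadjD m k) (hadj0 m k)). Qed.
End Adj.

Section Ent.
Variables (F : finFieldType) (n : nat).
Local Notation cfg := (config F n).

Lemma entE (f : cfg -> cfg -> algC) x y : ent (mkop f) x y = f x y.
Proof. by rewrite /ent /mkop mxE !enum_rankK. Qed.

Lemma op_eq (A B : op F n) : (forall x y, ent A x y = ent B x y) -> A = B.
Proof.
move=> H; apply/matrixP => i j; have := H (enum_val i) (enum_val j).
by rewrite /ent !enum_valK.
Qed.

Lemma ent_mul (A B : op F n) x y : ent (A *m B) x y = \sum_z ent A x z * ent B z y.
Proof.
rewrite /ent mxE (reindex (@enum_rank _)) //.
by apply: onW_bij; apply: enum_rank_bij.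
Qed.

Lemma ent_add (A B : op F n) x y : ent (A + B) x y = ent A x y + ent B x y.
Proof. by rewrite /ent mxE. Qed.
Lemma ent_sub (A B : op F n) x y : ent (A - B) x y = ent A x y - ent B x y.
Proof. by rewrite /ent !mxE. Qed.
Lemma ent_scale c (A : op F n) x y : ent (c *: A) x y = c * ent A x y.
Proof. by rewrite /ent mxE. Qed.
Lemma ent_one x y : ent (1%:M : op F n) x y = (x == y)%:R.
Proof. by rewrite /ent mxE (inj_eq enum_rank_inj). Qed.
Lemma ent_adj (A : op F n) x y : ent (adj A) x y = (ent A y x)^*.
Proof. by rewrite /ent /adj !mxE. Qed.
Lemma ent_sum (I : Type) (r : seq I) (P : pred I) (G : I -> op F n) x y :
  ent (\sum_(i <- r | P i) G i) x y = \sum_(i <- r | P i) ent (G i) x y.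
Proof. by rewrite /ent summxE. Qed.
End Ent.


Lemma prod_ind (I : finType) (P : pred I) (g : I -> algC) :
  \prod_j ((P j)%:R * g j) = [forall j, P j]%:R * \prod_j g j.
Proof.
rewrite big_split /=; congr (_ * _).
case: (boolP [forall j, P j]) => [/forallP H|/forallPn [j nj]].
  by rewrite big1 // => j _; rewrite H.
by rewrite (bigD1 j) //= (negbTE nj) mul0r.
Qed.

Section Eops.
Variables (F : finFieldType) (p n : nat).
Hypotheses (pr_p : prime p) (chF : p \in [pchar F]).
Local Notation cfg := (config F n).
Local Notation chi := (@xi_tr F p).

Lemma xi_tr_sum (I : Type) (r : seq I) (P : pred I) (f : I -> F) :
  chi (\sum_(i <- r | P i) f i) = \prod_(i <- r | P i) chi (f i).
Proof. exact: (big_morph _ (xi_trD pr_p chF) (xi_tr0 pr_p chF)). Qed.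

Lemma EopE (a b : 'I_n -> F) y x :
  ent (Eop p a b) y x = (y == [ffun j => x j + a j])%:R * \prod_j chi (b j * x j).
Proof.
rewrite entE prod_ind; congr (_ * _); congr (nat_of_bool _)%:R; apply/forallP/eqP => [H|->].
  by apply/ffunP => j; rewrite ffunE; apply/eqP.
by move=> j; rewrite ffunE.
Qed.

Lemma Eop_ext (a b a' b' : 'I_n -> F) : a =1 a' -> b =1 b' -> Eop p a b = Eop p a' b'.
Proof.
by move=> ea eb; apply: op_eq => y x; rewrite !entE; apply: eq_bigr => j _; rewrite ea eb.
Qed.

Lemma EopM (a b a' b' : 'I_n -> F) :
  Eop p a b *m Eop p a' b' =
  (\prod_j chi (b j * a' j)) *: Eop p (fun j => a j + a' j) (fun j => b j + b' j).
Proof.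
apply: op_eq => y x; rewrite ent_mul ent_scale (bigD1 [ffun j => x j + a' j]) //=.
rewrite big1 => [|z nz]; last by rewrite (EopE a') (negbTE nz) mul0r mulr0.
rewrite addr0 !EopE eqxx mul1r.
have -> : [ffun j => [ffun j0 => x j0 + a' j0] j + a j] = [ffun j => x j + (a j + a' j)].
  by apply/ffunP => j; rewrite !ffunE addrAC addrA.
rewrite mulrCA -mulrA; congr (_ * _).
rewrite -!big_split /=; apply: eq_bigr => j _; rewrite ffunE.
by rewrite mulrDr mulrDl !(xi_trD pr_p chF); ring.
Qed.

Lemma Eop0 : Eop p (fun _ : 'I_n => 0 : F) (fun _ => 0) = 1%:M.
Proof.
apply: op_eq => y x; rewrite EopE ent_one big1 ?mulr1 => [|j _]; last first.
  by rewrite mul0r (xi_tr0 pr_p chF).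
by congr (_%:R); congr (_ == _); apply/ffunP => j; rewrite ffunE addr0.
Qed.

Lemma EopU (a b : 'I_n -> F) : adj (Eop p a b) *m Eop p a b = 1%:M.
Proof.
apply: op_eq => y x; rewrite ent_mul ent_one (bigD1 [ffun j => y j + a j]) //=.
rewrite big1 => [|z nz]; last by rewrite ent_adj EopE (negbTE nz) mul0r conjC0 mul0r.
rewrite addr0 ent_adj !EopE eqxx mul1r.
have -> : ([ffun j => y j + a j] == [ffun j => x j + a j]) = (y == x).
  apply/eqP/eqP => [E|->] //; apply/ffunP => j.
  by have := congr1 (fun f : cfg => f j) E; rewrite !ffunE => /addIr.
case: eqP => [->|_]; last by rewrite mul0r mulr0.
rewrite mul1r rmorph_prod -big_split /= big1 // => j _.
by rewrite (xi_tr_conjK pr_p).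
Qed.

Lemma EopV (a b : 'I_n -> F) : Eop p a b *m adj (Eop p a b) = 1%:M.
Proof. exact/mulmx1C/EopU. Qed.

End Eops.


Section Evecs.
Variables (F : finFieldType) (p n : nat).
Hypotheses (pr_p : prime p) (chF : p \in [pchar F]).
Local Notation cfg := (config F n).
Local Notation chi := (@xi_tr F p).
Local Notation vec := ('rV[F]_(n + n)).

Lemma chiD x y : chi (x + y) = chi x * chi y. Proof. exact: xi_trD. Qed.
Lemma chi0 : chi 0 = 1. Proof. exact: xi_tr0. Qed.
Lemma chiK x : (chi x)^* * chi x = 1. Proof. exact: xi_tr_conjK. Qed.
Lemma chiN x : chi (- x) = (chi x)^*. Proof. exact: xi_trN. Qed.
Lemma chi_neq0 x : chi x != 0. Proof. exact: xi_tr_neq0. Qed.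

Lemma apartD (c c' : vec) j : apart (c + c') j = apart c j + apart c' j.
Proof. by rewrite /apart mxE. Qed.
Lemma bpartD (c c' : vec) j : bpart (c + c') j = bpart c j + bpart c' j.
Proof. by rewrite /bpart mxE. Qed.
Lemma apartZ t (c : vec) j : apart (t *: c) j = t * apart c j.
Proof. by rewrite /apart mxE. Qed.
Lemma bpartZ t (c : vec) j : bpart (t *: c) j = t * bpart c j.
Proof. by rewrite /bpart mxE. Qed.
Lemma apartN (c : vec) j : apart (- c) j = - apart c j.
Proof. by rewrite /apart mxE. Qed.
Lemma bpartN (c : vec) j : bpart (- c) j = - bpart c j.
Proof. by rewrite /bpart mxE. Qed.
Lemma apart0 j : apart (0 : vec) j = 0. Proof. by rewrite /apart mxE. Qed.
Lemma bpart0 j : bpart (0 : vec) j = 0. Proof. by rewrite /bpart mxE. Qed.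

Definition omega (c c' : vec) : algC := \prod_j chi (bpart c j * apart c' j).

Lemma omegaK c c' : (omega c c')^* * omega c c' = 1.
Proof.
rewrite /omega rmorph_prod -big_split big1 // => j _ /=; exact: chiK.
Qed.

Lemma EvecM (c c' : vec) : Evec p c *m Evec p c' = omega c c' *: Evec p (c + c').
Proof.
rewrite /Evec EopM //; congr (_ *: _); apply: Eop_ext => j.
  by rewrite apartD. by rewrite bpartD.
Qed.

Lemma Evec0 : Evec p (0 : vec) = 1%:M.
Proof.
rewrite /Evec -(@Eop0 F p n pr_p chF); apply: Eop_ext => j.
  by rewrite apart0. by rewrite bpart0.
Qed.

Lemma EvecU (c : vec) : adj (Evec p c) *m Evec p c = 1%:M.
Proof. exact: EopU. Qed.
Lemma EvecV (c : vec) : Evec p c *m adj (Evec p c) = 1%:M.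
Proof. exact: EopV. Qed.

Lemma Evec_comm (c e : vec) :
  Evec p c *m Evec p e = chi (sform e c) *: (Evec p e *m Evec p c).
Proof.
rewrite !EvecM scalerA [e + c]addrC; congr (_ *: _).
rewrite /omega /sform xi_tr_sum // -big_split /=; apply: eq_bigr => j _.
by rewrite -chiD; congr chi; ring.
Qed.

End Evecs.


Section OnJ.
Variables (F : finFieldType) (p n : nat).
Hypotheses (pr_p : prime p) (chF : p \in [pchar F]).
Local Notation cfg := (config F n).
Local Notation chi := (@xi_tr F p).
Local Notation vec := ('rV[F]_(n + n)).
Variable J : {set 'I_n}.
Local Notation PJ := (proj J).
Local Notation PC := (proj (~: J)).

Definition onJ (K : op F n) :=
  forall x y, ent K x y = (PC x == PC y)%:R * ent K (PJ x) (PJ y).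

Lemma onJ_acts K : onJ K -> acts_only_on J K.
Proof. by move=> H; exists (ent K) => x y; rewrite H mulrC. Qed.

Lemma projK S (x : cfg) : proj S (proj S x) = proj S x.
Proof. by apply/ffunP => j; rewrite /proj !ffunE; case: (j \in S). Qed.
Lemma projCJ (x : cfg) : PC (PJ x) = 0.
Proof. by apply/ffunP => j; rewrite /proj !ffunE inE; case: (j \in J). Qed.
Lemma projJC (x : cfg) : PJ (PC x) = 0.
Proof. by apply/ffunP => j; rewrite /proj !ffunE inE; case: (j \in J). Qed.
Lemma projD S (x y : cfg) : proj S (x + y) = proj S x + proj S y.
Proof. by apply/ffunP => j; rewrite /proj !ffunE; case: ifP; rewrite ?addr0. Qed.

Lemma proj_eq (x y : cfg) : (x == y) = (PJ x == PJ y) && (PC x == PC y).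
Proof.
apply/eqP/andP => [->//|[/eqP e1 /eqP e2]]; apply/ffunP => j.
have := congr1 (fun f : cfg => f j) e1; have := congr1 (fun f : cfg => f j) e2.
by rewrite !ffunE inE; case: (j \in J).
Qed.

Lemma onJ_one : onJ 1%:M.
Proof.
move=> x y; rewrite !ent_one ?projK proj_eq andbC.
by case: (PC x == PC y); rewrite ?mul1r ?mul0r.
Qed.

Lemma onJ_add A B : onJ A -> onJ B -> onJ (A + B).
Proof. by move=> hA hB x y; rewrite !ent_add hA hB ?projK mulrDr. Qed.
Lemma onJ_sub A B : onJ A -> onJ B -> onJ (A - B).
Proof. by move=> hA hB x y; rewrite !ent_sub hA hB ?projK mulrBr. Qed.
Lemma onJ_scale c A : onJ A -> onJ (c *: A).
Proof. by move=> hA x y; rewrite !ent_scale hA ?projK mulrCA. Qed.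
Lemma onJ_zero : onJ 0.
Proof. by move=> x y; rewrite /ent !mxE mulr0. Qed.
Lemma onJ_sum (I : Type) (r : seq I) (P : pred I) (G : I -> op F n) :
  (forall i, P i -> onJ (G i)) -> onJ (\sum_(i <- r | P i) G i).
Proof.
move=> H; elim: r => [|i r IH]; first by rewrite big_nil; exact: onJ_zero.
by rewrite big_cons; case: ifP => Pi //; apply: onJ_add => //; apply: H.
Qed.
Lemma onJ_adj A : onJ A -> onJ (adj A).
Proof. by move=> hA x y; rewrite !ent_adj hA ?projK rmorphM rmorph_nat eq_sym. Qed.

Lemma sum_shift (g : cfg -> algC) (t : cfg) : PC t = t ->
  \sum_z (t == PC z)%:R * ((PC z == t)%:R * g (PJ z)) =
  \sum_z (0 == PC z)%:R * ((PC z == 0)%:R * g (PJ z)).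
Proof.
move=> Ht; rewrite (reindex_inj (addrI t)) /=; apply: eq_bigr => z _.
rewrite !projD Ht.
have -> : PJ t = 0 by rewrite -Ht projJC.
have E w : (t == t + w) = (0 == w) by rewrite -{1}(addr0 t) (inj_eq (addrI t)).
by rewrite add0r [t + _ == t]eq_sym !E [PC z == 0]eq_sym.
Qed.

Lemma onJ_mul A B : onJ A -> onJ B -> onJ (A *m B).
Proof.
move=> hA hB x y; rewrite !ent_mul mulr_sumr.
under eq_bigr => z _ do rewrite hA hB.
under [X in _ = X]eq_bigr => z _ do rewrite hA hB ?projK !projCJ.
case: (eqVneq (PC x) (PC y)) => [E|ne].
  rewrite (_ : true%:R = 1) //.
  have SS := sum_shift (fun w => ent A (PJ x) w * ent B w (PJ y)) (projK _ y).
  transitivity (\sum_z (PC y == PC z)%:R * ((PC z == PC y)%:R *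
     (ent A (PJ x) (PJ z) * ent B (PJ z) (PJ y)))).
    by apply: eq_bigr => z _; rewrite E; ring.
  by rewrite SS; apply: eq_bigr => z _; ring.
rewrite [RHS]big1 => [|z _]; last by rewrite (_ : false%:R = 0 :> algC) // mul0r.
rewrite big1 // => z _.
case: (eqVneq (PC x) (PC z)) => [e1|ne1]; last by rewrite (_ : false%:R = 0 :> algC) // !mul0r.
have : PC z != PC y by rewrite -e1.
by move/negbTE => ->; rewrite (_ : false%:R = 0 :> algC) // mul0r mulr0.
Qed.

Definition supp_in (S : {set 'I_n}) (c : vec) :=
  [forall j, (j \notin S) ==> (apart c j == 0) && (bpart c j == 0)].

Lemma prod_ind1 (I : finType) (P : pred I) :
  \prod_j ((P j)%:R : algC) = [forall j, P j]%:R.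
Proof.
have := prod_ind P (fun _ => 1); rewrite big1_eq mulr1 => <-.
by apply: eq_bigr => j _; rewrite mulr1.
Qed.

Lemma onJ_Evec (c : vec) : supp_in J c -> onJ (Evec p c).
Proof.
move=> /forallP sc x y; rewrite /Evec !entE.
have -> : (PC x == PC y) =
   [forall j, (j \in J) || (x j == y j)].
  apply/eqP/forallP => [E j|H].
    have := congr1 (fun f : cfg => f j) E; rewrite !ffunE inE.
    by case: (j \in J) => //= ->.
  apply/ffunP => j; rewrite /proj !ffunE inE; have := H j.
  by case: (j \in J) => //= /eqP.
rewrite -prod_ind1 -big_split /=; apply: eq_bigr => j _.
rewrite !ffunE; case: (boolP (j \in J)) => jJ /=; first by rewrite mul1r.
have := sc j; rewrite jJ /= => /andP [/eqP -> /eqP ->].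
by rewrite !addr0 !mul0r eqxx (_ : true%:R = 1 :> algC) // mul1r.
Qed.

End OnJ.


Lemma natr_true (R : pzSemiRingType) : (true%:R : R) = 1. Proof. by []. Qed.
Lemma natr_false (R : pzSemiRingType) : (false%:R : R) = 0. Proof. by []. Qed.

Section Dual.
Variables (F : finFieldType) (n : nat).
Local Notation vec := ('rV[F]_(n + n)).

Lemma sformDl (x y w : vec) : sform (x + y) w = sform x w + sform y w.
Proof.
rewrite /sform -big_split /=; apply: eq_bigr => j _.
rewrite /apart /bpart !mxE; ring.
Qed.
Lemma sformZl t (x w : vec) : sform (t *: x) w = t * sform x w.
Proof.
rewrite /sform mulr_sumr; apply: eq_bigr => j _.
rewrite /apart /bpart !mxE; ring.
Qed.
Lemma sform0l (w : vec) : sform 0 w = 0.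
Proof. by rewrite /sform big1 // => j _; rewrite /apart /bpart !mxE; ring. Qed.
Lemma sformNl (x w : vec) : sform (- x) w = - sform x w.
Proof. by rewrite -scaleN1r sformZl mulN1r. Qed.
Lemma sform_suml (I : Type) (r : seq I) (P : pred I) (G : I -> vec) w :
  sform (\sum_(i <- r | P i) G i) w = \sum_(i <- r | P i) sform (G i) w.
Proof. exact: (big_morph _ (fun x y => sformDl x y w) (sform0l w)). Qed.
Lemma sform_anti (x y : vec) : sform x y = - sform y x.
Proof.
rewrite /sform -sumrN; apply: eq_bigr => j _; ring.
Qed.
Lemma sformDr (x y w : vec) : sform w (x + y) = sform w x + sform w y.
Proof. by rewrite sform_anti sformDl opprD -!sform_anti. Qed.
Lemma sformZr t (x w : vec) : sform w (t *: x) = t * sform w x.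
Proof. by rewrite sform_anti sformZl -mulrN -sform_anti. Qed.
Lemma sformNr (x w : vec) : sform w (- x) = - sform w x.
Proof. by rewrite sform_anti sformNl opprK -sform_anti. Qed.

Definition ua (j : 'I_n) : vec := delta_mx 0 (lshift n j).
Definition ub (j : 'I_n) : vec := delta_mx 0 (rshift n j).

Lemma apart_ua i j : apart (ua j) i = (i == j)%:R.
Proof. by rewrite /apart /ua mxE eqxx eq_shift. Qed.
Lemma bpart_ua i j : bpart (ua j) i = 0.
Proof. by rewrite /bpart /ua mxE eq_rlshift andbF. Qed.
Lemma apart_ub i j : apart (ub j) i = 0.
Proof. by rewrite /apart /ub mxE eq_lrshift andbF. Qed.
Lemma bpart_ub i j : bpart (ub j) i = (i == j)%:R.
Proof. by rewrite /bpart /ub mxE eqxx eq_shift. Qed.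

Lemma sform_ua_l j (w : vec) : sform (ua j) w = bpart w j.
Proof.
rewrite /sform (bigD1 j) //= big1 => [|i /negbTE ij].
  by rewrite apart_ua bpart_ua eqxx natr_true; ring.
by rewrite apart_ua bpart_ua ij natr_false; ring.
Qed.
Lemma sform_ub_l j (w : vec) : sform (ub j) w = - apart w j.
Proof.
rewrite /sform (bigD1 j) //= big1 => [|i /negbTE ij].
  by rewrite apart_ub bpart_ub eqxx natr_true; ring.
by rewrite apart_ub bpart_ub ij natr_false; ring.
Qed.
Lemma sform_ua_r j (w : vec) : sform w (ua j) = - bpart w j.
Proof. by rewrite sform_anti sform_ua_l. Qed.
Lemma sform_ub_r j (w : vec) : sform w (ub j) = apart w j.
Proof. by rewrite sform_anti sform_ub_l opprK. Qed.

Definition dS (S : {set 'I_n}) : 'rV[F]_(n + n) :=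
  \row_k (match split k with inl j => (j \in S)%:R | inr j => (j \in S)%:R end).
Definition fS (S : {set 'I_n}) : 'Hom(vec, vec) := linfun (mulmxr (diag_mx (dS S))).

Lemma apart_fS S (v : vec) j : apart (fS S v) j = if j \in S then apart v j else 0.
Proof.
rewrite /fS lfunE /= /apart mul_mx_diag !mxE.
rewrite -[lshift n j]/(unsplit (inl _ j)) unsplitK.
by case: (j \in S); rewrite ?mulr1 ?mulr0.
Qed.
Lemma bpart_fS S (v : vec) j : bpart (fS S v) j = if j \in S then bpart v j else 0.
Proof.
rewrite /fS lfunE /= /bpart mul_mx_diag !mxE.
rewrite -[rshift n j]/(unsplit (inr _ j)) unsplitK.
by case: (j \in S); rewrite ?mulr1 ?mulr0.
Qed.

Lemma vec_eq (v w : vec) : (forall j, apart v j = apart w j) ->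
  (forall j, bpart v j = bpart w j) -> v = w.
Proof.
move=> ha hb; apply/rowP => k; rewrite -(splitK k).
case: (split k) => j /=; [exact: ha | exact: hb].
Qed.

End Dual.
Arguments ua {F n} j.
Arguments ub {F n} j.
Arguments dS {F n} S.
Arguments fS {F n} S.

Section Dual2.
Variables (F : finFieldType) (n : nat).
Local Notation vec := ('rV[F]_(n + n)).

Lemma exists_orth (T : {vspace vec}) : (\dim T < n + n)%N ->
  exists2 w : vec, w != 0 & forall x, x \in T -> sform x w = 0.
Proof.
move=> dT; set m := \dim T; pose B := vbasis T.
pose M : 'M[F]_(n + n, m) := \matrix_(k, i)
  (match split k with inl j => - bpart B`_i j | inr j => apart B`_i j end).
have HM (w : vec) i : (w *m M) 0 i = sform B`_i w.
  rewrite mxE big_split_ord /= /sform -big_split /=; apply: eq_bigr => j _.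
  rewrite !mxE -[lshift n j]/(unsplit (inl _ j)) -[rshift n j]/(unsplit (inr _ j)).
  by rewrite !unsplitK /apart /bpart; ring.
have rk : (0 < \rank (kermx M))%N.
  by rewrite mxrank_ker subn_gt0 (leq_ltn_trans (rank_leq_col M)).
have [i ri] : exists i, row i (kermx M) != 0.
  case: (pickP (fun i => row i (kermx M) != 0)) => [i H|H]; first by exists i.
  exfalso; move: rk; suff -> : kermx M = 0 by rewrite mxrank0.
  apply/row_matrixP => i; rewrite row0; have := H i; by move/negbFE/eqP.
exists (row i (kermx M)) => // x xT.
rewrite (coord_vbasis xT) sform_suml big1 // => l _.
by rewrite sformZl -HM -row_mul mulmx_ker row0 mxE mulr0.
Qed.

Lemma fS_fS S (v : vec) : fS S (fS S v) = fS S v.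
Proof.
by apply: vec_eq => j; rewrite ?apart_fS ?bpart_fS; case: (j \in S).
Qed.
Lemma fS_fSC S (v : vec) : fS S (fS (~: S) v) = 0.
Proof.
apply: vec_eq => j; rewrite ?apart_fS ?bpart_fS ?apart0 ?bpart0 inE;
  by case: (j \in S).
Qed.
Lemma fS_split S (v : vec) : v = fS S v + fS (~: S) v.
Proof.
apply: vec_eq => j; rewrite ?apartD ?bpartD ?apart_fS ?bpart_fS inE;
  by case: (j \in S); rewrite ?addr0 ?add0r.
Qed.
Lemma sform_fS S (e c : vec) : supp_in S e -> sform e (fS S c) = sform e c.
Proof.
move=> /forallP se; rewrite /sform; apply: eq_bigr => j _.
rewrite apart_fS bpart_fS; case: (boolP (j \in S)) => // jS.
by have := se j; rewrite jS /= => /andP [/eqP -> /eqP ->]; ring.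
Qed.

Variables (C : {vspace vec}) (I J : {set 'I_n}).
Hypotheses (IJ : I \subset J)
  (hd : forall w, w \in sdual C -> w != 0 -> (#|I :|: ~: J| < swtv w)%N).

Lemma dual_sep (e : vec) : supp_in I e -> e != 0 ->
  exists2 c, (c \in C) && supp_in J c & sform e c != 0.
Proof.
move=> /forallP se ne.
set A := I :|: ~: J.
have [j jI nzj] : exists2 j, j \in I & (apart e j != 0) || (bpart e j != 0).
  case: (pickP (fun j => (j \in I) && ((apart e j != 0) || (bpart e j != 0))))
    => [j /andP[]|H]; first by exists j.
  have Hk k : (apart e k == 0) && (bpart e k == 0).
    have := H k; have := se k; case: (k \in I) => /= [_ /negbT|/andP [-> ->] _] //.
    by rewrite negb_or !negbK.
  exfalso; move/negP: ne; apply; apply/eqP; apply: vec_eq => k; rewrite ?apart0 ?bpart0;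
  by case/andP: (Hk k) => /eqP a0 /eqP b0; rewrite ?a0 ?b0.
have jA : j \in A by rewrite inE jI.
pose t : vec := if bpart e j != 0 then ua j else ub j.
have et : sform e t != 0.
  rewrite /t; case: ifP => h; first by rewrite sform_ua_r oppr_eq0.
  by rewrite sform_ub_r; move: nzj; rewrite h orbF.
have tz k : k != j -> apart t k = 0 /\ bpart t k = 0.
  move=> /negbTE kj; rewrite /t; case: ifP => _;
  by rewrite ?apart_ua ?bpart_ua ?apart_ub ?bpart_ub kj.
have tA : fS A t = t.
  apply: vec_eq => k; rewrite ?apart_fS ?bpart_fS; case: (boolP (k \in A)) => // kA;
  have kj : k != j by apply: contraNneq kA => ->.
  - by rewrite (tz k kj).1.
  - by rewrite (tz k kj).2.
set T := (fS A @: C + fS (~: A) @: fullv)%VS.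
have inT1 c : c \in C -> fS A c \in T.
  by move=> cC; rewrite -[fS A c]addr0; apply: memv_add; [apply: memv_img | apply: mem0v].
have inT2 z : fS (~: A) z \in T.
  by rewrite -[fS _ z]add0r; apply: memv_add; [apply: mem0v | apply: memv_img; apply: memvf].
case: (boolP (t \in T)) => [tT|tT].
  move/memv_addP: tT => [u /memv_imgP [c cC ->] [v /memv_imgP [z _ ->] tE]].
  have tc : t = fS A c by rewrite -tA tE linearD /= fS_fS fS_fSC addr0.
  exists c; last by rewrite -(sform_fS (S := A)) -?tc //; apply/forallP => k;
    apply/implyP => kA; have := se k; rewrite inE negb_or in kA;
    by case/andP: kA => /negbTE -> _.
  rewrite cC /=; apply/forallP => k; apply/implyP => kJ.
  have kA : k \in A by rewrite inE inE kJ orbT.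
  have kj : k != j by apply: contraNneq kJ => ->; rewrite (subsetP IJ).
  have := tz k kj; rewrite tc apart_fS bpart_fS kA => -[-> ->].
  by rewrite eqxx.
exfalso.
have dT : (\dim T < n + n)%N.
  rewrite ltnNge; apply/negP => h; move/negP: tT; apply.
  suff /eqP -> : T == fullv by apply: memvf.
  by rewrite eqEdim subvf dimvf /= /dim /= mul1n.
have [w nw ow] := exists_orth dT.
have wA k : k \notin A -> apart w k = 0 /\ bpart w k = 0.
  move=> kA.
  have fu (u : vec) : (forall i, i != k -> apart u i = 0 /\ bpart u i = 0) -> u \in T.
    move=> hu; have -> : u = fS (~: A) u; last by apply: inT2.
    apply: vec_eq => i; rewrite ?apart_fS ?bpart_fS inE; case: (boolP (i \in A)) => //= iA;
    have ik : i != k by apply: contraNneq kA => <-.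
    - by rewrite (hu i ik).1.
    - by rewrite (hu i ik).2.
  split.
  - have := ow (ub k); rewrite sform_ub_l => /(_ _)/eqP; rewrite oppr_eq0 => H.
    apply/eqP; apply: H; apply: fu => i /negbTE ik; by rewrite apart_ub bpart_ub ik.
  - have := ow (ua k); rewrite sform_ua_l => H; apply: H; apply: fu => i /negbTE ik.
    by rewrite apart_ua bpart_ua ik.
have wC : w \in sdual C.
  rewrite inE; apply/forallP => c; apply/implyP => cC.
  by rewrite (fS_split A c) sformDl (ow _ (inT1 _ cC)) (ow _ (inT2 _)) addr0.
have := hd wC nw; rewrite ltnNge; move/negP; apply.
rewrite /swtv; apply: subset_leq_card; apply/subsetP => k; rewrite inE.
apply: contraLR => kA; have [-> ->] := wA k kA; by rewrite eqxx.
Qed.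

End Dual2.


Lemma adj_norm_neq0 (N : nat) (v : 'cV[algC]_N) : v != 0 -> (adj v *m v) 0 0 != 0.
Proof.
move=> nv; apply/negP => /eqP H; move/negP: nv; apply; apply/eqP.
apply/matrixP => i j; rewrite (ord1 j) mxE.
move: H; rewrite mxE => /eqP; rewrite psumr_eq0 => [|k _]; last first.
  by rewrite /adj !mxE mulrC mul_conjC_ge0.
move=> /allP /(_ i (mem_index_enum _)) /=; rewrite /adj !mxE mulrC mul_conjC_eq0.
by move/eqP.
Qed.

Section Proj.
Variables (F : finFieldType) (p n : nat).
Hypotheses (pr_p : prime p) (chF : p \in [pchar F]).
Local Notation vec := ('rV[F]_(n + n)).
Local Notation chi := (@xi_tr F p).
Local Notation E := (@Evec F p n).
Local Notation om := (@omega F p n).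
Variables (C : {vspace vec}) (lam : op F n -> algC) (I J : {set 'I_n}).
Hypotheses (IJ : I \subset J)
  (hd : forall w, w \in sdual C -> w != 0 -> (#|I :|: ~: J| < swtv w)%N).

Definition CJ : {set vec} := [set c | (c \in C) && supp_in J c].
Local Notation N := (#|CJ|%:R : algC).
Definition lamc (c : vec) := lam (E c).
Definition mu (e c : vec) := lamc c * chi (sform e c).
Definition Pi (e : vec) : op F n := N^-1 *: \sum_(c in CJ) (mu e c)^* *: E c.

Lemma supp_in0 S : supp_in S (0 : vec).
Proof. by apply/forallP => j; rewrite apart0 bpart0 eqxx implybT. Qed.
Lemma supp_inD S (x y : vec) : supp_in S x -> supp_in S y -> supp_in S (x + y).
Proof.
move=> /forallP hx /forallP hy; apply/forallP => j; apply/implyP => jS.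
move: (hx j) (hy j); rewrite jS /= => /andP [/eqP a1 /eqP b1] /andP [/eqP a2 /eqP b2].
by rewrite apartD bpartD a1 b1 a2 b2 addr0 eqxx.
Qed.
Lemma supp_inZ S t (x : vec) : supp_in S x -> supp_in S (t *: x).
Proof.
move=> /forallP hx; apply/forallP => j; apply/implyP => jS.
move: (hx j); rewrite jS /= => /andP [/eqP a1 /eqP b1].
by rewrite apartZ bpartZ a1 b1 mulr0 eqxx.
Qed.
Lemma supp_inN S (x : vec) : supp_in S x -> supp_in S (- x).
Proof. by move=> h; rewrite -scaleN1r supp_inZ. Qed.
Lemma supp_inS (S S' : {set 'I_n}) (x : vec) : S \subset S' -> supp_in S x -> supp_in S' x.
Proof.
move=> sub /forallP hx; apply/forallP => j; apply/implyP => jS.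
by have := hx j; rewrite (contra (subsetP sub j)) //.
Qed.

Lemma CJ0 : (0 : vec) \in CJ.
Proof. by rewrite inE mem0v supp_in0. Qed.
Lemma CJD x y : x \in CJ -> y \in CJ -> x + y \in CJ.
Proof.
rewrite !inE => /andP [xC xs] /andP [yC ys].
by rewrite memvD // supp_inD.
Qed.
Lemma CJZ t x : x \in CJ -> t *: x \in CJ.
Proof. by rewrite !inE => /andP [xC xs]; rewrite memvZ // supp_inZ. Qed.
Lemma CJN x : x \in CJ -> - x \in CJ.
Proof. by move=> h; rewrite -scaleN1r CJZ. Qed.
Lemma CJDr x y : x \in CJ -> (x + y \in CJ) = (y \in CJ).
Proof.
move=> hx; apply/idP/idP => [h|]; last exact: CJD.
by rewrite -(addKr x y) CJD // CJN.
Qed.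

Lemma N_neq0 : N != 0.
Proof. by rewrite pnatr_eq0 -lt0n; apply/card_gt0P; exists 0; apply: CJ0. Qed.

Lemma sum_CJ_shift (V : nmodType) (c1 : vec) (g : vec -> V) : c1 \in CJ ->
  \sum_(c in CJ) g (c1 + c) = \sum_(c in CJ) g c.
Proof.
move=> h; symmetry; rewrite (reindex_inj (addrI c1)) /=.
by apply: eq_bigl => c; rewrite CJDr.
Qed.
Lemma sum_CJ_neg (V : nmodType) (g : vec -> V) :
  \sum_(c in CJ) g (- c) = \sum_(c in CJ) g c.
Proof.
symmetry; rewrite (reindex_inj oppr_inj) /=.
by apply: eq_bigl => c; apply/idP/idP => h; [rewrite -(opprK c)|]; apply: CJN.
Qed.

Lemma orth (e : vec) : supp_in I e ->
  \sum_(c in CJ) chi (sform e c) = (e == 0)%:R * N.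
Proof.
move=> se; case: (eqVneq e 0) => [->|ne].
  rewrite mul1r; under eq_bigr => c _ do rewrite sform0l chi0 //.
  by rewrite sumr_const.
have [c0 /andP [c0C c0J] s0] := dual_sep IJ hd se ne.
have c0CJ : c0 \in CJ by rewrite inE c0C.
have [u hu] := xi_tr_nontriv pr_p chF.
pose c1 := (u / sform e c0) *: c0.
have c1CJ : c1 \in CJ by apply: CJZ.
have ec1 : sform e c1 = u by rewrite sformZr divfK.
have := sum_CJ_shift (fun c => chi (sform e c)) c1CJ.
under eq_bigr => c _ do rewrite sformDr (chiD pr_p chF) ec1.
rewrite -mulr_sumr => /eqP; rewrite -subr_eq0 -{2}(mul1r (\sum_(c in CJ) _)) -mulrBl.
rewrite mulf_eq0 subr_eq0 (negbTE hu) /= => /eqP ->.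
by rewrite mul0r.
Qed.


Let EU := @EvecU F p n pr_p.
Let EV := @EvecV F p n pr_p.
Let EM := @EvecM F p n pr_p chF.
Let E0 := @Evec0 F p n pr_p chF.
Let Ecomm := @Evec_comm F p n pr_p chF.
Let oK := @omegaK F p n pr_p.
Let cK := @chiK F p pr_p.
Let cN := @chiN F p pr_p chF.
Let cD := @chiD F p pr_p chF.

Lemma inQ_E v c : inQ p C lam v -> c \in C -> E c *m v = lamc c *: v.
Proof. by move=> h cC; apply: h; apply: genS_E. Qed.

Lemma scal_inj (v : ket F n) a b : v != 0 -> a *: v = b *: v -> a = b.
Proof.
move=> nv /eqP; rewrite -subr_eq0 -scalerBl scalemx_eq0 (negbTE nv) orbF subr_eq0.
by move/eqP.
Qed.

Lemma lam_unit v c : inQ p C lam v -> v != 0 -> c \in C -> (lamc c)^* * lamc c = 1.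
Proof.
move=> hv nv cC; have h := inQ_E hv cC.
have : adj (E c *m v) *m (E c *m v) = adj v *m v.
  by rewrite hadjM -mulmxA (mulmxA (adj (E c))) EU mul1mx.
rewrite h hadjZ -scalemxAl -scalemxAr scalerA => /(congr1 (fun M : 'M[algC]_1 => M 0 0)).
rewrite mxE => H; apply: (mulIf (adj_norm_neq0 nv)); by rewrite H mul1r.
Qed.

Lemma CJ_C c : c \in CJ -> c \in C.
Proof. by rewrite inE => /andP []. Qed.

Lemma Pi_act v e e' : inQ p C lam v -> supp_in I e -> supp_in I e' ->
  Pi e' *m (E e *m v) = (e' == e)%:R *: (E e *m v).
Proof.
move=> hv se se'; case: (eqVneq v 0) => [->|nv]; first by rewrite !mulmx0 scaler0.
rewrite /Pi -scalemxAl mulmx_suml.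
transitivity (N^-1 *: \sum_(c in CJ) chi (sform (e - e') c) *: (E e *m v)).
  congr (_ *: _); apply: eq_bigr => c cJ; have cC := CJ_C cJ.
  rewrite -scalemxAl mulmxA Ecomm -scalemxAl -mulmxA (inQ_E hv cC) -scalemxAr !scalerA.
  congr (_ *: _); rewrite /mu rmorphM sformDl sformNl cD cN.
  rewrite -[RHS]mul1r -(lam_unit hv nv cC); ring.
rewrite -scaler_suml orth; last by apply: supp_inD => //; apply: supp_inN.
by rewrite scalerA subr_eq0 [e == e']eq_sym mulrCA mulVf ?N_neq0 // mulr1.
Qed.

Section WithV0.
Variable v0 : ket F n.
Hypotheses (hv0 : inQ p C lam v0) (nv0 : v0 != 0).

Lemma lam_mul c c' : c \in C -> c' \in C ->
  lamc c * lamc c' = om c c' * lamc (c + c').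
Proof.
move=> cC c'C; apply: (scal_inj nv0).
rewrite mulrC -[in LHS]scalerA -(inQ_E hv0 cC) scalemxAr -(inQ_E hv0 c'C) mulmxA EM.
by rewrite -scalemxAl (inQ_E hv0 (memvD cC c'C)) scalerA.
Qed.

Lemma lam0 : lamc 0 = 1.
Proof.
apply: (scal_inj nv0); rewrite -(inQ_E hv0 (mem0v C)) scale1r.
by rewrite E0 mul1mx.
Qed.

Lemma adjE c : adj (E c) = (om c (- c))^* *: E (- c).
Proof.
have H : E c *m E (- c) = om c (- c) *: 1%:M by rewrite EM subrr E0.
have : adj (E c) *m (E c *m E (- c)) = E (- c) by rewrite mulmxA EU mul1mx.
rewrite H -scalemxAr mulmx1 => <-.
by rewrite scalerA oK scale1r.
Qed.

Lemma Pi_herm e : adj (Pi e) = Pi e.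
Proof.
rewrite /Pi hadjZ hadj_sum fmorphV rmorph_nat; congr (_ *: _).
under eq_bigr => c _ do rewrite hadjZ conjCK adjE scalerA.
rewrite -(sum_CJ_neg (fun c => (mu e c * (om c (- c))^*) *: E (- c))).
apply: eq_bigr => c cJ; rewrite opprK; congr (_ *: _).
have cC := CJ_C cJ; have ncC : - c \in C by rewrite memvN.
have H1 := lam_mul ncC cC; rewrite addNr lam0 mulr1 in H1.
have H2 := lam_unit hv0 nv0 cC.
have H3 := oK (- c) c.
have Hm : lamc (- c) = om (- c) c * (lamc c)^*.
  by rewrite -H1 -[LHS]mulr1 -H2; ring.
rewrite /mu Hm rmorphM sformNr cN -[RHS]mul1r -H3; ring.
Qed.

Lemma mu_mul e c c' : c \in C -> c' \in C ->
  mu e c * mu e c' = om c c' * mu e (c + c').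
Proof.
move=> cC c'C; rewrite /mu sformDr cD.
have := lam_mul cC c'C => H.
transitivity ((lamc c * lamc c') * (chi (sform e c) * chi (sform e c'))); first by ring.
by rewrite H; ring.
Qed.

Lemma mu_shift e e' c : (mu e' c)^* = (mu e c)^* * chi (sform (e - e') c).
Proof.
rewrite /mu !rmorphM sformDl sformNl cD cN.
rewrite -[LHS]mul1r -(cK (sform e c)); ring.
Qed.

Lemma Pi_idem e e' : supp_in I e -> supp_in I e' ->
  Pi e *m Pi e' = (e == e')%:R *: Pi e.
Proof.
move=> se se'.
set S := \sum_(c in CJ) (mu e c)^* *: E c.
have key c c' : c \in CJ -> c' \in CJ ->
  ((mu e c)^* *: E c) *m ((mu e' c')^* *: E c') =
  chi (sform (e - e') c') *: ((mu e (c' + c))^* *: E (c' + c)).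
  move=> cJ c'J; have cC := CJ_C cJ; have c'C := CJ_C c'J.
  rewrite -scalemxAl -scalemxAr EM !scalerA [c + c']addrC; congr (_ *: _).
  have H : (mu e c)^* * (mu e c')^* = (om c c')^* * (mu e (c + c'))^*.
    by rewrite -!rmorphM mu_mul.
  rewrite (mu_shift e e' c'); have H3 := oK c c'.
  transitivity ((mu e c)^* * (mu e c')^* * om c c' * chi (sform (e - e') c')); first by ring.
  rewrite H [c + c']addrC -[RHS]mul1r -H3; ring.
rewrite /Pi -scalemxAl -scalemxAr scalerA mulmx_suml.
under eq_bigr => c _ do rewrite mulmx_sumr.
transitivity ((N^-1 * N^-1) *: \sum_(c in CJ) \sum_(c' in CJ)
   chi (sform (e - e') c') *: ((mu e (c' + c))^* *: E (c' + c))).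
  congr (_ *: _); apply: eq_bigr => c cJ; apply: eq_bigr => c' c'J; exact: key.
rewrite exchange_big /=.
under eq_bigr => c' c'J do rewrite -scaler_sumr (sum_CJ_shift (fun c => (mu e c)^* *: E c) c'J).
rewrite -scaler_suml orth; last by apply: supp_inD => //; apply: supp_inN.
rewrite !scalerA subr_eq0; congr (_ *: _).
by field; apply: N_neq0.
Qed.

End WithV0.

End Proj.


Section Gamma.
Variables (F : finFieldType) (p n : nat).
Hypotheses (pr_p : prime p) (chF : p \in [pchar F]).
Local Notation vec := ('rV[F]_(n + n)).
Local Notation E := (@Evec F p n).
Local Notation om := (@omega F p n).
Variable I : {set 'I_n}.

Let EM := @EvecM F p n pr_p chF.
Let E0 := @Evec0 F p n pr_p chF.
Let oK := @omegaK F p n pr_p.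

Definition Y (rho : op F n) (e : vec) := E e *m rho *m adj (E e).

Definition uab (i : 'I_n) (a b : F) : vec := a *: ua i + b *: ub i.

Lemma U_E i a b : Eop p (unit_at i a) (unit_at i b) = E (uab i a b).
Proof.
rewrite /Evec; apply: Eop_ext => j;
rewrite /uab ?apartD ?bpartD ?apartZ ?bpartZ ?apart_ua ?bpart_ua ?apart_ub ?bpart_ub /unit_at;
by case: (j == i); rewrite ?mulr1 ?mulr0 ?addr0 ?add0r.
Qed.

Lemma supp_uab i a b : i \in I -> supp_in I (uab i a b).
Proof.
move=> iI; apply/forallP => j; apply/implyP => jI.
have ji : (j == i) = false by apply/negbTE; apply: contraNneq jI => ->.
rewrite /uab ?apartD ?bpartD ?apartZ ?bpartZ ?apart_ua ?bpart_ua ?apart_ub ?bpart_ub ji.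
by rewrite !mulr0 addr0 eqxx.
Qed.

Lemma Y_shift rho u e : E u *m Y rho e *m adj (E u) = Y rho (u + e).
Proof.
rewrite /Y !mulmxA -[E u *m E e *m rho *m adj (E e) *m adj (E u)]mulmxA -hadjM EM.
by rewrite hadjZ -scalemxAl -scalemxAl -scalemxAr scalerA mulrC oK scale1r.
Qed.

Lemma gamma_decomp (l : seq 'I_n) (rho : op F n) : all (mem I) l ->
  exists W : vec -> algC, (forall e, W e != 0 -> supp_in I e) /\
    \sum_e W e = 1 /\
    foldr (@gamma_at F p n) rho l = \sum_e W e *: Y rho e.
Proof.
elim: l => [_|i l IH /= /andP [iI /IH [W [Ws [W1 Wr]]]]].
  exists (fun e => (e == 0)%:R); split; [|split].
  - by move=> e; case: (eqVneq e 0) => [->|]; [rewrite supp_in0 | rewrite eqxx].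
  - rewrite (bigD1 0) //= eqxx big1 ?addr0 // => e /negbTE ->; by [].
  - rewrite /= (bigD1 0) //= eqxx big1 ?addr0 => [|e /negbTE ->]; last by rewrite scale0r.
    by rewrite scale1r /Y E0 hadj1 mul1mx mulmx1.
set c := ((#|F| ^ 2)%:R : algC)^-1.
have cq : c * (#|F|%:R * #|F|%:R) = 1.
  by rewrite /c natrX expr2 mulVf // mulf_neq0 // pnatr_eq0 -lt0n; apply/card_gt0P; exists 0.
exists (fun e' => c * \sum_(a : F) \sum_(b : F) W (e' - uab i a b)); split; [|split].
- move=> e'; apply: contraR => ne'; rewrite big1 ?mulr0 // => a _; rewrite big1 // => b _.
  apply/eqP; apply: contraR ne' => /negP/negP/Ws h.
  by rewrite -(subrK (uab i a b) e'); apply: supp_inD => //; apply: supp_uab.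
- rewrite -mulr_sumr exchange_big /=.
  under eq_bigr => a _ do rewrite exchange_big /=.
  transitivity (c * \sum_(a : F) \sum_(b : F) (1 : algC)); last first.
    by rewrite !sumr_const -[#|xpredT|]/#|F| -mulr_natr cq.
  congr (_ * _); apply: eq_bigr => a _; apply: eq_bigr => b _.
  rewrite -W1 (reindex_inj (addIr (uab i a b))) /=.
  by apply: eq_bigr => e _; rewrite addrK.
- rewrite Wr /gamma_at.
  transitivity (c *: \sum_(a : F) \sum_(b : F) \sum_e W e *: Y rho (uab i a b + e)).
    congr (_ *: _); apply: eq_bigr => a _; apply: eq_bigr => b _.
    rewrite U_E mulmx_sumr mulmx_suml; apply: eq_bigr => e _.
    by rewrite -scalemxAr -scalemxAl Y_shift.
  symmetry; under eq_bigr => e' _ do rewrite -scalerA scaler_suml.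
  rewrite -scaler_sumr; congr (_ *: _).
  rewrite exchange_big /=; apply: eq_bigr => a _.
  under eq_bigr => e' _ do rewrite scaler_suml.
  rewrite exchange_big /=; apply: eq_bigr => b _.
  rewrite (reindex_inj (addIr (uab i a b))) /=.
  by apply: eq_bigr => e _; rewrite addrK addrC.
Qed.

End Gamma.


Lemma swt_le (F : finFieldType) (n : nat) (D : {set 'rV[F]_(n + n)}) w :
  w \in D -> w != 0 -> (swt D <= swtv w)%N.
Proof.
move=> wD nw; rewrite /swt -big_filter.
have : w \in [seq x <- index_enum _ | (x \in D) && (x != 0)].
  by rewrite mem_filter wD nw mem_index_enum.
elim: (filter _ _) => //= x s IH; rewrite big_cons inE => /orP [/eqP <-|/IH h].
  exact: geq_minl.
exact: leq_trans (geq_minr _ _) h.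
Qed.

Lemma swt_leq_n (F : finFieldType) (n : nat) (D : {set 'rV[F]_(n + n)}) :
  (swt D <= n)%N.
Proof.
rewrite /swt; apply: (big_ind (fun m => m <= n)%N) => //.
  by move=> x y hx _; apply: leq_trans (geq_minl _ _) hx.
move=> v _; rewrite /swtv; apply: leq_trans (max_card _) _; by rewrite card_ord.
Qed.

Lemma onJ_Pi (F : finFieldType) (p n : nat) (C : {vspace 'rV[F]_(n + n)}) lam
  (J : {set 'I_n}) e : onJ J (Pi p C lam J e).
Proof.
apply: onJ_scale; apply: onJ_sum => c cJ; apply: onJ_scale; apply: onJ_Evec.
by move: cJ; rewrite inE => /andP [].
Qed.

Theorem proposition20 (F : finFieldType) (p n : nat)
  (C : {vspace 'rV[F]_(n + n)}) (lam : op F n -> algC) (I J : {set 'I_n}) :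
  prime p -> p \in [pchar F] ->
  symp_self_orth C ->
  stab_char p C lam ->
  I != set0 -> I \proper J ->
  (n - swt (sdual C) + #|I| + 1 <= #|J|)%N ->
  locally_recoverable p C lam I J.
Proof.
move=> pr_p chF _ _ _ IpJ hc.
have IJ : I \subset J by apply: proper_sub.
have hd : forall w, w \in sdual C -> w != 0 -> (#|I :|: ~: J| < swtv w)%N.
  move=> w wC nw; have h1 := swt_le wC nw; have h2 := swt_leq_n (sdual C).
  have h3 : (#|I :|: ~: J| <= #|I| + #|~: J|)%N by rewrite cardsU leq_subr.
  have h4 : (#|J| + #|~: J| = n)%N by rewrite cardsC card_ord.
  lia.
have allI : all (mem I) (enum I) by apply/allP => i; rewrite mem_enum.
pose E := @Evec F p n.
case: (classic (exists v0, inQ p C lam v0 /\ v0 != 0)) => [[v0 [hv0 nv0]]|nov]; last first.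
  exists [:: 1%:M]; split.
    split; first by move=> K; rewrite mem_seq1 => /eqP ->; apply: onJ_acts; apply: onJ_one.
    by rewrite big_seq1 hadj1 mul1mx.
  move=> v hv; have -> : v = 0.
    by apply/eqP; apply/negPn/negP => nv; apply: nov; exists v.
  have [W [_ [_ HW]]] := gamma_decomp pr_p chF (0 : op F n) allI.
  rewrite mul0mx /gammaI HW big1 => [|e _]; last by rewrite /Y mulmx0 mul0mx scaler0.
  by rewrite /apply_op big_seq1 mulmx0 mul0mx.
pose P e := Pi p C lam J e.
pose PI := [seq e <- enum 'rV[F]_(n + n) | supp_in I e].
have PIu : uniq PI by rewrite filter_uniq // enum_uniq.
have PIs e : e \in PI -> supp_in I e by rewrite mem_filter => /andP [].
have PIm e : supp_in I e -> e \in PI by move=> h; rewrite mem_filter h mem_enum.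
pose S := \sum_(e <- PI) P e.
pose K0 := 1%:M - S.
pose Ks := [seq adj (E e) *m P e | e <- PI] ++ [:: K0].
have herm e : adj (P e) = P e := @Pi_herm F p n pr_p chF C lam J v0 hv0 nv0 e.
have idem e e' : supp_in I e -> supp_in I e' -> P e *m P e' = (e == e')%:R *: P e :=
  @Pi_idem F p n pr_p chF C lam I J IJ hd v0 hv0 nv0 e e'.
have sum1 (V : lmodType algC) e (X : V) : e \in PI ->
    \sum_(e' <- PI) (e' == e)%:R *: X = X.
  move=> eP; rewrite (bigD1_seq e eP PIu) /= eqxx scale1r big1 ?addr0 // => e' ne.
  by rewrite (negbTE ne) scale0r.
exists Ks; split.
  split.
    move=> K; rewrite mem_cat => /orP [/mapP [e eP ->]|]; last first.
      rewrite mem_seq1 => /eqP ->; apply: onJ_acts; apply: onJ_sub; first exact: onJ_one.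
      by apply: onJ_sum => e _; exact: onJ_Pi.
    apply: onJ_acts; apply: onJ_mul; last exact: onJ_Pi.
    by apply: onJ_adj; apply: onJ_Evec; exact: supp_inS IJ (PIs e eP).
  have SS : S *m S = S.
    rewrite {1}/S mulmx_suml; apply: eq_big_seq => e eP.
    rewrite /S mulmx_sumr -[RHS](sum1 _ e (P e) eP); apply: eq_big_seq => e' e'P.
    by rewrite idem ?PIs // eq_sym.
  have hS : adj S = S by rewrite /S hadj_sum; apply: eq_bigr => e _; rewrite herm.
  rewrite big_cat big_map big_seq1 /=.
  have -> : \sum_(e <- PI) adj (adj (E e) *m P e) *m (adj (E e) *m P e) = S.
    rewrite /S; apply: eq_big_seq => e eP.
    rewrite hadjM hadjK herm mulmxA -(mulmxA (P e)) (@EvecV F p n pr_p) mulmx1.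
    by rewrite idem ?PIs // eqxx scale1r.
  rewrite /K0 hadjB hadj1 hS mulmxBl mul1mx mulmxBr mulmx1 SS subrr subr0.
  by rewrite addrC subrK.
move=> v hv; rewrite /gammaI.
have [W [Ws [W1 ->]]] := gamma_decomp pr_p chF (v *m adj v) allI.
have recY e : supp_in I e -> apply_op Ks (Y p (v *m adj v) e) = v *m adj v.
  move=> se; set w := E e *m v.
  have sand K : K *m Y p (v *m adj v) e *m adj K = (K *m w) *m adj (K *m w).
    by rewrite /Y /w !hadjM !mulmxA.
  have act e' : e' \in PI -> P e' *m w = (e' == e)%:R *: w.
    by move=> h; apply: (@Pi_act F p n pr_p chF C lam I J IJ hd v e e' hv se (PIs e' h)).
  rewrite /apply_op big_cat big_seq1 big_map /= !sand.
  have -> : K0 *m w = 0.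
    rewrite /K0 mulmxBl mul1mx /S mulmx_suml.
    have -> : \sum_(i <- PI) P i *m w = \sum_(e' <- PI) (e' == e)%:R *: w.
      by apply: eq_big_seq => e' h; apply: act.
    by rewrite sum1 ?PIm // subrr.
  rewrite mul0mx addr0 -[RHS](sum1 _ e (v *m adj v) (PIm e se)).
  apply: eq_big_seq => e' e'P; rewrite sand -[adj (E e') *m P e' *m w]mulmxA act //.
  case: (eqVneq e' e) => [->|ne]; last by rewrite !scale0r mulmx0 mul0mx.
  rewrite !scale1r /w mulmxA (@EvecU F p n pr_p) mul1mx //.
transitivity (\sum_e W e *: apply_op Ks (Y p (v *m adj v) e)).
  rewrite /apply_op; under eq_bigr => K _ do rewrite mulmx_sumr mulmx_suml.
  rewrite exchange_big /=; apply: eq_bigr => e _; rewrite scaler_sumr; apply: eq_bigr => K _.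
  by rewrite -scalemxAr -scalemxAl.
transitivity (\sum_e W e *: (v *m adj v)).
  apply: eq_bigr => e _; case: (eqVneq (W e) 0) => [->|nW]; first by rewrite !scale0r.
  by rewrite recY // Ws.
by rewrite -scaler_suml W1 scale1r.
Qed.
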